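(* Suppose $X$ has well-defined scattered $\Pi_1$-products and $A$ is a homotopy cut-set for paths $\alpha,\beta:[0,1]\to X$. Then either $\alpha\simeq\beta$, or there is a perfect set $P\subseteq A$ such that (1) $B=P\cup\{0,1\}$ is a homotopy cut-set for $\alpha$ and $\beta$, and (2) whenever $(c,d)\in\mathcal{I}(B)$ contains $(a,b)\in\mathcal{I}(A)$, we have $\alpha|_{[c,a]}\simeq\beta|_{[c,a]}$ if $c<a$ and $\alpha|_{[b,d]}\simeq\beta|_{[b,d]}$ if $b<d$.
   Context: $\simeq$ is path-homotopy. For a compact set $A\subseteq\mathbb{R}$, $\mathcal{I}(A)$ is the set of connected components of $[\min A,\max A]\setminus A$. For paths $\alpha,\beta:[s,t]\to X$, a set $A\subseteq[s,t]$ is a homotopy cut-set for $\alpha,\beta$ if $A$ is closed, nowhere dense, contains $\{s,t\}$, $\alpha|_A=\beta|_A$, and $\alpha|_{[a,b]}\simeq\beta|_{[a,b]}$ for every $(a,b)\in\mathcal{I}(A)$. $X$ has well-defined scattered $\Pi_1$-products if any two paths $[0,1]\to X$ admitting a scattered homotopy cut-set are path-homotopic. A set is perfect if it is closed and has no isolated points. *)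

(* Defs.v *)
From Stdlib Require Import Reals Lra Classical.
Open Scope R_scope.

Record Topology (X : Type) := {
  is_open : (X -> Prop) -> Prop;
  open_full : is_open (fun _ => True);
  open_inter : forall U V, is_open U -> is_open V -> is_open (fun x => U x /\ V x);
  open_union : forall (F : (X -> Prop) -> Prop),
      (forall U, F U -> is_open U) -> is_open (fun x => exists U, F U /\ U x)
}.
Arguments is_open {X} _ _.

(* A path [s,t] -> X is represented by a function R -> X continuous on [s,t]
   (w.r.t. the subspace topology of [s,t]); values outside [s,t] are irrelevant. *)
Definition path {X : Type} (T : Topology X) (s t : R) (f : R -> X) : Prop :=
  s <= t /\
  forall U, is_open T U -> forall x, s <= x <= t -> U (f x) ->
    exists eps, eps > 0 /\
      forall y, s <= y <= t -> Rabs (y - x) < eps -> U (f y).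

(* Path homotopy (rel endpoints) between alpha|_[a,b] and beta|_[a,b].
   H is continuous on [a,b] x [0,1] (product topology, i.e. the max metric). *)
Definition path_homotopic {X : Type} (T : Topology X) (a b : R)
    (alpha beta : R -> X) : Prop :=
  exists H : R -> R -> X,
    (forall U, is_open T U -> forall x u, a <= x <= b -> 0 <= u <= 1 -> U (H x u) ->
       exists eps, eps > 0 /\
         forall y v, a <= y <= b -> 0 <= v <= 1 ->
           Rabs (y - x) < eps -> Rabs (v - u) < eps -> U (H y v)) /\
    (forall x, a <= x <= b -> H x 0 = alpha x) /\
    (forall x, a <= x <= b -> H x 1 = beta x) /\
    (forall u, 0 <= u <= 1 -> H a u = alpha a) /\
    (forall u, 0 <= u <= 1 -> H b u = alpha b).

Definition closure (A : R -> Prop) (x : R) : Prop :=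
  forall eps, eps > 0 -> exists y, A y /\ Rabs (y - x) < eps.

Definition closedR (A : R -> Prop) : Prop :=
  forall x, closure A x -> A x.

Definition nowhere_dense (A : R -> Prop) : Prop :=
  ~ exists x eps, eps > 0 /\ forall y, Rabs (y - x) < eps -> closure A y.

Definition scattered (A : R -> Prop) : Prop :=
  forall S : R -> Prop, (forall x, S x -> A x) -> (exists x, S x) ->
    exists x, S x /\ exists eps, eps > 0 /\
      forall y, S y -> Rabs (y - x) < eps -> y = x.

Definition perfect (P : R -> Prop) : Prop :=
  closedR P /\
  forall x, P x -> forall eps, eps > 0 ->
    exists y, P y /\ y <> x /\ Rabs (y - x) < eps.

(* (a,b) ∈ I(A): for a compact A, the connected components of
   [min A, max A] \ A are exactly the open intervals (a,b) with
   a < b, a, b ∈ A and (a,b) ∩ A = ∅. *)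
Definition in_I (A : R -> Prop) (a b : R) : Prop :=
  a < b /\ A a /\ A b /\ forall x, a < x < b -> ~ A x.

Definition homotopy_cut_set {X : Type} (T : Topology X) (s t : R)
    (alpha beta : R -> X) (A : R -> Prop) : Prop :=
  (forall x, A x -> s <= x <= t) /\
  closedR A /\ nowhere_dense A /\ A s /\ A t /\
  (forall x, A x -> alpha x = beta x) /\
  (forall a b, in_I A a b -> path_homotopic T a b alpha beta).

Definition scattered_Pi1_products {X : Type} (T : Topology X) : Prop :=
  forall alpha beta : R -> X, path T 0 1 alpha -> path T 0 1 beta ->
    (exists A, scattered A /\ homotopy_cut_set T 0 1 alpha beta A) ->
    path_homotopic T 0 1 alpha beta.

(* Main.v *)
Require Import Defs.
From Stdlib Require Import Reals.
From Stdlib Require Import Lra Classical.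
Open Scope R_scope.

Definition Pk (A : R -> Prop) (x : R) : Prop :=
  A x /\ forall eps, eps > 0 -> ~ scattered (fun y => A y /\ Rabs (y - x) < eps).

Lemma noniso (S : R -> Prop) y d :
  (~ exists x, S x /\ exists eps, eps > 0 /\ forall z, S z -> Rabs (z - x) < eps -> z = x) ->
  S y -> d > 0 -> exists z, S z /\ z <> y /\ Rabs (z - y) < d.
Proof.
  intros H Sy Hd. apply NNPP; intro H2. apply H. exists y; split; auto.
  exists d; split; auto. intros z Sz Hz. apply NNPP; intro Hne. apply H2.
  exists z; auto.
Qed.

Lemma Lloc (A S : R -> Prop) w eps : eps > 0 -> S w -> (forall z, S z -> A z) ->
  scattered (fun y => A y /\ Rabs (y - w) < eps) ->
  exists z, S z /\ exists d, d > 0 /\ forall y, S y -> Rabs (y - z) < d -> y = z.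
Proof.
  intros He Sw HSA Hsc.
  destruct (Hsc (fun z => S z /\ Rabs (z - w) < eps)) as [z [[Sz Hz] [d [Hd Hiso]]]].
  - intros x [Sx Hx]; split; auto.
  - exists w; split; auto. replace (w - w) with 0 by ring. rewrite Rabs_R0; auto.
  - exists z; split; auto. exists (Rmin d (eps - Rabs (z - w))). split.
    + apply Rmin_pos; lra.
    + intros y Sy Hy. pose proof (Rmin_l d (eps - Rabs (z - w))).
      pose proof (Rmin_r d (eps - Rabs (z - w))).
      apply Hiso; [split; auto|lra].
      replace (y - w) with ((y - z) + (z - w)) by ring.
      eapply Rle_lt_trans; [apply Rabs_triang|]. lra.
Qed.

Lemma notPk A w : A w -> ~ Pk A w ->
  exists eps, eps > 0 /\ scattered (fun y => A y /\ Rabs (y - w) < eps).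
Proof.
  intros Aw H. apply NNPP; intro H2. apply H. split; auto.
  intros eps He Hs. apply H2; eauto.
Qed.

Lemma L2 (A S : R -> Prop) w : (forall z, S z -> A z) -> S w -> ~ Pk A w ->
  exists z, S z /\ exists d, d > 0 /\ forall y, S y -> Rabs (y - z) < d -> y = z.
Proof.
  intros HSA Sw HP. destruct (notPk A w (HSA w Sw) HP) as [eps [He Hs]].
  eapply Lloc; eauto.
Qed.

Lemma scat_sub (S S' : R -> Prop) : scattered S -> (forall z, S' z -> S z) -> scattered S'.
Proof. intros H Hs U HU Hne. apply H; auto. Qed.

Lemma closed_scat_nd S : closedR S -> scattered S -> nowhere_dense S.
Proof.
  intros Hc Hs [x [eps [He Hall]]].
  destruct (Hs (fun y => Rabs (y - x) < eps)) as [z [Hz [d [Hd Hiso]]]].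
  - intros y Hy. apply Hc, Hall; auto.
  - exists x. replace (x - x) with 0 by ring. rewrite Rabs_R0; auto.
  - set (r := Rmin d (eps - Rabs (z - x))).
    pose proof (Rmin_l d (eps - Rabs (z - x))).
    pose proof (Rmin_r d (eps - Rabs (z - x))).
    assert (Hr : r > 0) by (apply Rmin_pos; lra).
    assert (z + r / 2 = z).
    { apply Hiso.
      - replace (z + r / 2 - x) with (r / 2 + (z - x)) by ring.
        eapply Rle_lt_trans; [apply Rabs_triang|].
        rewrite Rabs_pos_eq by lra. fold r in H, H0. lra.
      - replace (z + r / 2 - z) with (r / 2) by ring.
        rewrite Rabs_pos_eq by lra. fold r in H, H0. lra. }
    lra.
Qed.

Lemma path_affine {X} (T : Topology X) (al : R -> X) k c :
  path T 0 1 al -> k > 0 -> 0 <= c -> k + c <= 1 -> path T 0 1 (fun t => al (k * t + c)).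
Proof.
  intros [_ Hp] Hk Hc Hkc. split; [lra|]. intros U HU x Hx HUx.
  destruct (Hp U HU (k * x + c)) as [eps [He Hy]]; [split; nra|exact HUx|].
  set (e' := eps / k). assert (Hke : k * e' = eps) by (unfold e'; field; lra).
  assert (e' > 0) by (unfold e'; apply Rdiv_lt_0_compat; lra).
  exists e'. split; auto. intros y Hy1 Hy2. apply Hy; [split; nra|].
  destruct (Rabs_def2 _ _ Hy2). apply Rabs_def1; nra.
Qed.

Lemma ph_affine {X} (T : Topology X) a b a' b' k m (al be : R -> X) :
  k > 0 -> a = k * a' + m -> b = k * b' + m -> path_homotopic T a b al be ->
  path_homotopic T a' b' (fun t => al (k * t + m)) (fun t => be (k * t + m)).
Proof.
  intros Hk Ha Hb [H [Hc [H0 [H1 [Hl Hr]]]]].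
  exists (fun x u => H (k * x + m) u). split; [|split; [|split; [|split]]].
  - intros U HU x u Hx Hu HUx.
    destruct (Hc U HU (k * x + m) u) as [eps [He Hy]];
      [rewrite Ha, Hb; split; nra|auto|auto|].
    set (e' := eps / k). assert (Hke : k * e' = eps) by (unfold e'; field; lra).
    assert (e' > 0) by (unfold e'; apply Rdiv_lt_0_compat; lra).
    exists (Rmin eps e'). split; [apply Rmin_pos; lra|].
    intros y v Hy1 Hv Hy2 Hv2. pose proof (Rmin_l eps e'). pose proof (Rmin_r eps e').
    apply Hy; auto; [rewrite Ha, Hb; split; nra| |lra].
    destruct (Rabs_def2 _ _ Hy2). apply Rabs_def1; nra.
  - intros x Hx. apply H0. rewrite Ha, Hb; split; nra.
  - intros x Hx. apply H1. rewrite Ha, Hb; split; nra.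
  - intros u Hu. simpl. rewrite <- Ha. apply Hl; auto.
  - intros u Hu. simpl. rewrite <- Hb. apply Hr; auto.
Qed.

Lemma ph_ext {X} (T : Topology X) a b (a1 b1 a2 b2 : R -> X) : a <= b ->
  path_homotopic T a b a1 b1 -> (forall x, a <= x <= b -> a1 x = a2 x) ->
  (forall x, a <= x <= b -> b1 x = b2 x) -> path_homotopic T a b a2 b2.
Proof.
  intros Hab [H [Hc [H0 [H1 [Hl Hr]]]]] Ea Eb.
  exists H. split; [|split; [|split; [|split]]]; auto.
  - intros x Hx. rewrite <- Ea; auto.
  - intros x Hx. rewrite <- Eb; auto.
  - intros u Hu. rewrite <- Ea; [auto|lra].
  - intros u Hu. rewrite <- Ea; [auto|lra].
Qed.

Lemma sub_hom {X} (T : Topology X) (HX : scattered_Pi1_products T) (al be : R -> X)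
  c e (C : R -> Prop) :
  path T 0 1 al -> path T 0 1 be -> 0 <= c -> c < e -> e <= 1 ->
  scattered C -> closedR C -> (forall x, C x -> c <= x <= e) -> C c -> C e ->
  (forall x, C x -> al x = be x) ->
  (forall a b, in_I C a b -> path_homotopic T a b al be) ->
  path_homotopic T c e al be.
Proof.
  intros Ha Hb Hc Hce He Hscat Hcl Hbnd Cc Ce Heq Hgaps.
  set (k := e - c). assert (Hk : k > 0) by (unfold k; lra).
  set (C' := fun t => C (k * t + c)).
  assert (Hsc : scattered C').
  { intros S HS [t0 Ht0].
    destruct (Hscat (fun z => exists t, S t /\ z = k * t + c))
      as [z [[t [St Hz]] [d [Hd Hiso]]]].
    - intros z [t [St ->]]. apply HS; auto.
    - exists (k * t0 + c); eauto.
    - exists t; split; auto.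
      set (d' := d / k). assert (Hkd : k * d' = d) by (unfold d'; field; lra).
      assert (d' > 0) by (unfold d'; apply Rdiv_lt_0_compat; lra).
      exists d'. split; auto. intros y Sy Hy.
      assert (k * y + c = z).
      { apply Hiso; [exists y; auto|]. subst z.
        destruct (Rabs_def2 _ _ Hy). apply Rabs_def1; nra. }
      subst z. apply Rmult_eq_reg_l with k; lra. }
  assert (Hcl' : closedR C').
  { intros x Hx. unfold C'. apply Hcl. intros eps Hep.
    set (e' := eps / k). assert (Hke : k * e' = eps) by (unfold e'; field; lra).
    assert (e' > 0) by (unfold e'; apply Rdiv_lt_0_compat; lra).
    destruct (Hx e') as [y [Cy Hy]]; auto.
    exists (k * y + c). split; auto.
    destruct (Rabs_def2 _ _ Hy). apply Rabs_def1; nra. }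
  assert (Hh : path_homotopic T 0 1 (fun t => al (k * t + c)) (fun t => be (k * t + c))).
  { apply HX.
    - apply path_affine; auto; unfold k; lra.
    - apply path_affine; auto; unfold k; lra.
    - exists C'. split; auto.
      split; [|split; [|split; [|split; [|split; [|split]]]]].
      + intros x Cx. destruct (Hbnd _ Cx). assert (k = e - c) by reflexivity. split; apply (Rmult_le_reg_l k); lra.
      + auto.
      + apply closed_scat_nd; auto.
      + unfold C'. replace (k * 0 + c) with c by ring; auto.
      + unfold C'. replace (k * 1 + c) with e by (unfold k; ring); auto.
      + intros x Cx. apply Heq; auto.
      + intros a' b' [Hab [Ca [Cb Hgap]]].
        apply ph_affine with (a := k * a' + c) (b := k * b' + c); auto.
        apply Hgaps. split; [nra|split; [auto|split; [auto|]]].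
        intros x Hx Cx. set (t := (x - c) / k).
        assert (Ht : k * t + c = x) by (unfold t; field; lra).
        apply (Hgap t).
        * rewrite <- Ht in Hx. destruct Hx; split; nra.
        * unfold C'. rewrite Ht; auto. }
  assert (Hh2 := ph_affine T 0 1 c e (1 / k) (- c / k) _ _
                   ltac:(apply Rdiv_lt_0_compat; lra)
                   ltac:(field; lra) ltac:(unfold k; field; lra) Hh).
  apply ph_ext with (a1 := (fun t => al (k * (1 / k * t + - c / k) + c)))
      (b1 := (fun t => be (k * (1 / k * t + - c / k) + c))); [lra|exact Hh2| |].
  - intros x _. f_equal. field. lra.
  - intros x _. f_equal. field. lra.
Qed.

Theorem mainTheorem15 (X : Type) (T : Topology X)
  (HX : scattered_Pi1_products T)
  (alpha beta : R -> X) (Ha : path T 0 1 alpha) (Hb : path T 0 1 beta)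
  (A : R -> Prop) (HA : homotopy_cut_set T 0 1 alpha beta A) :
  path_homotopic T 0 1 alpha beta \/
  exists P : R -> Prop,
    perfect P /\ (forall x, P x -> A x) /\
    homotopy_cut_set T 0 1 alpha beta (fun x => P x \/ x = 0 \/ x = 1) /\
    (forall c d a b,
       in_I (fun x => P x \/ x = 0 \/ x = 1) c d -> in_I A a b ->
       c <= a -> b <= d ->
       (c < a -> path_homotopic T c a alpha beta) /\
       (b < d -> path_homotopic T b d alpha beta)).
Proof.
  destruct HA as [Abnd [Acl [And [A0 [A1 [Aeq Agap]]]]]].
  right. exists (Pk A).
  assert (G : forall c e, c < e -> A c -> A e -> (forall x, c < x < e -> ~ Pk A x) ->
             path_homotopic T c e alpha beta).
  { intros c e Hce Ac Ae HnP. destruct (Abnd c Ac), (Abnd e Ae).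
    apply (sub_hom T HX) with (C := fun x => A x /\ c <= x <= e); auto; try lra.
    - intros S HS [y Sy]. apply NNPP; intro Hno.
      assert (Hw : exists w, S w /\ c < w < e).
      { destruct (HS y Sy) as [Ay Hyb].
        destruct (classic (c < y < e)) as [Hin|Hout]; [exists y; auto|].
        assert (y <= c \/ e <= y).
        { destruct (Rle_or_lt y c); [left; auto|].
          destruct (Rle_or_lt e y); [right; auto|].
          exfalso; apply Hout; split; auto. }
        destruct (noniso S y (e - c) Hno Sy) as [z [Sz [Hzy Hz]]]; [lra|].
        exists z. split; auto. destruct (HS z Sz) as [_ Hzb].
        destruct (Rabs_def2 _ _ Hz).
        destruct (Rdichotomy _ _ Hzy); lra. }
      destruct Hw as [w [Sw Hw]].
      apply Hno. apply (L2 A S w); auto.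
      intros z Sz; apply HS; auto.
    - intros x Hx. split.
      + apply Acl. intros eps He. destruct (Hx eps He) as [y [[Ay _] Hy]]; eauto.
      + split.
        * destruct (Rle_or_lt c x); auto. exfalso.
          destruct (Hx (c - x)) as [y [[_ [Hy1 _]] Hy]]; [lra|].
          destruct (Rabs_def2 _ _ Hy). lra.
        * destruct (Rle_or_lt x e); auto. exfalso.
          destruct (Hx (x - e)) as [y [[_ [_ Hy1]] Hy]]; [lra|].
          destruct (Rabs_def2 _ _ Hy). lra.
    - split; auto; lra.
    - split; auto; lra.
    - split; auto; lra.
    - intros x [Ax _]; auto.
    - intros a b [Hab [[Aa Ha'] [[Ab Hb'] Hg]]]. apply Agap.
      split; auto. split; auto. split; auto.
      intros x Hx Ax. apply (Hg x Hx). split; auto; lra. }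
  assert (Pcl : closedR (Pk A)).
  { intros x Hx.
    assert (Ax : A x).
    { apply Acl; intros eps He; destruct (Hx eps He) as [y [[Ay _] Hy]]; eauto. }
    split; auto. intros eps He Hs.
    destruct (Hx (eps / 2)) as [y [[Ay Py] Hy]]; [lra|].
    apply (Py (eps / 2)); [lra|]. apply scat_sub with (1 := Hs).
    intros z [Az Hz]. split; auto.
    destruct (Rabs_def2 _ _ Hy), (Rabs_def2 _ _ Hz). apply Rabs_def1; lra. }
  assert (BA : forall x, (Pk A x \/ x = 0 \/ x = 1) -> A x).
  { intros x [[Ax _]|[->| ->]]; auto. }
  split; [|split; [|split]].
  - split; auto.
    intros x [Ax Px] eps He. apply NNPP; intro Hno. apply (Px eps He).
    intros S HS [y0 Sy0]. apply NNPP; intro Hn2.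
    assert (Hw : exists w, S w /\ w <> x).
    { destruct (Req_dec y0 x) as [->|Hne]; [|exists y0; auto].
      destruct (noniso S x 1 Hn2 Sy0) as [w [Sw [Hw _]]]; [lra|]. eauto. }
    destruct Hw as [w [Sw Hwx]].
    destruct (HS w Sw) as [Aw Hw]. apply Hn2.
    apply (L2 A S w); [intros z Sz; apply HS; auto|auto|].
    intro Pw. apply Hno. exists w; auto.
  - intros x [Ax _]; auto.
  - split; [|split; [|split; [|split; [|split; [|split]]]]].
    + intros x Bx. apply Abnd, BA; auto.
    + intros x Hx. destruct (Req_dec x 0) as [->|H0]; [right; left; auto|].
      destruct (Req_dec x 1) as [->|H1]; [right; right; auto|]. left.
      apply Pcl. intros eps He.
      assert (Rabs x > 0) by (apply Rabs_pos_lt; auto).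
      assert (Rabs (x - 1) > 0) by (apply Rabs_pos_lt; lra).
      pose proof (Rmin_l eps (Rmin (Rabs x) (Rabs (x - 1)))).
      pose proof (Rmin_r eps (Rmin (Rabs x) (Rabs (x - 1)))).
      pose proof (Rmin_l (Rabs x) (Rabs (x - 1))).
      pose proof (Rmin_r (Rabs x) (Rabs (x - 1))).
      set (r := Rmin eps (Rmin (Rabs x) (Rabs (x - 1)))).
      assert (r > 0) by (apply Rmin_pos; [lra|apply Rmin_pos; lra]).
      destruct (Hx r) as [y [By Hy]]; auto. unfold r in Hy.
      destruct By as [Py|[->| ->]].
      * exists y; split; auto; lra.
      * replace (0 - x) with (- x) in Hy by ring. rewrite Rabs_Ropp in Hy. lra.
      * rewrite Rabs_minus_sym in Hy. lra.
    + intros [x [eps [He Hall]]]. apply And. exists x, eps. split; auto.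
      intros y Hy e' He'. destruct (Hall y Hy e' He') as [w [Bw Hw]].
      exists w; split; auto.
    + right; left; auto.
    + right; right; auto.
    + intros x Bx. apply Aeq, BA; auto.
    + intros c d [Hcd [Bc [Bd Hg]]]. apply G; auto.
      intros x Hx Px. apply (Hg x Hx). left; auto.
  - intros c d a b [Hcd [Bc [Bd Hg]]] [Hab [Aa [Ab _]]] Hca Hbd. split; intro H.
    + apply G; auto. intros x Hx Px. apply (Hg x); [lra|left; auto].
    + apply G; auto. intros x Hx Px. apply (Hg x); [lra|left; auto].
Qed.
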